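(* Let $\mathcal{C}$ be a uniformly quasi-wide class of labelled graphs and let $\psi(x,y)$ be a first-order interpretation formula. Then for every $m\in\mathbb{N}$ there exists $p\in\mathbb{N}$ such that for every $H \in I_\psi(\mathcal{C})$, every independent set in the graph of the relation $\cong^{D,H}_m$ has size at most $p$.
   Context: All graphs are finite, simple, undirected and loopless; labelled graphs carry unary predicates $L_a$, $a\in Lab$, for a finite set $Lab$. $N(u)$ is the neighbourhood of $u$ and $D(u,v):=N(u)\,\Delta\,N(v)$. Differential game on a graph $H$ from tuples $\bar a=(a_1,\dots,a_k)$, $\bar b=(b_1,\dots,b_k)$: in each of $m$ rounds, with current tuples $(a_1,\dots,a_n),(b_1,\dots,b_n)$, Spoiler chooses an index $i\le n$ and a vertex $v\in D(a_i,b_i)$ and declares whether $v$ becomes $a_{n+1}$ or $b_{n+1}$ (if all $D(a_i,b_i)$ are empty, Duplicator wins); Duplicator answers with a vertex $w\in D(a_i,b_i)$ (same $i$) which becomes the other of $b_{n+1},a_{n+1}$. Duplicator wins at the end iff $a_i\mapsto b_i$ is a label-preserving isomorphism of the induced subgraphs (equalities, adjacencies and labels preserved). $u\cong^{D,H}_m v$ means Duplicator has a winning strategy in the $m$-round differential game on $H$ from $((u),(v))$. The graph of this relation has vertex set $V(H)$ and an edge between distinct $u,v$ iff $u\cong^{D,H}_m v$; an independent set in it is a set of vertices no two distinct of which are related. An interpretation formula is an FO formula $\psi(x,y)$ (over the vocabulary of labelled graphs) defining a symmetric irreflexive relation on every graph; $I_\psi(G)$ is the unlabelled graph on $V(G)$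 with edges $\{uv : G\models \psi(u,v)\}$, and $I_\psi(\mathcal{C})=\{I_\psi(G):G\in\mathcal{C}\}$. Uniformly quasi-wide: $\mathcal{C}$ is uniformly quasi-wide if for every $r\in\mathbb{N}$ there are a function $N:\mathbb{N}\to\mathbb{N}$ and a constant $s\in\mathbb{N}$ such that for every $k\in\mathbb{N}$, every $G\in\mathcal{C}$ and every $A\subseteq V(G)$ with $|A|\ge N(k)$ there is a set $S\subseteq V(G)$ with $|S|\le s$ such that $A\setminus S$ contains at least $k$ vertices with pairwise distance more than $r$ in $G\setminus S$. *)

(* Defs.v *)
From mathcomp Require Import all_boot.
Set Implicit Arguments. Unset Strict Implicit. Unset Printing Implicit Defensive.

Record LGraph (Lab : finType) := {
  V : finType;
  adj : rel V;
  adj_sym : symmetric adj;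
  adj_irr : irreflexive adj;
  lab : Lab -> pred V
}.

Inductive formula (Lab : Type) :=
| FEq  : nat -> nat -> formula Lab
| FAdj : nat -> nat -> formula Lab
| FLab : Lab -> nat -> formula Lab
| FNot : formula Lab -> formula Lab
| FAnd : formula Lab -> formula Lab -> formula Lab
| FOr  : formula Lab -> formula Lab -> formula Lab
| FEx  : nat -> formula Lab -> formula Lab
| FAll : nat -> formula Lab -> formula Lab.

Definition upd (T : Type) (env : nat -> T) (x : nat) (w : T) : nat -> T :=
  fun j => if j == x then w else env j.

Fixpoint sat (Lab : finType) (G : LGraph Lab) (f : formula Lab)
    (env : nat -> V G) : Prop :=
  match f with
  | FEq x y => env x = env y
  | FAdj x y => adj (env x) (env y)
  | FLab a x => lab a (env x)
  | FNot g => ~ sat g env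
  | FAnd g h => sat g env /\ sat h env
  | FOr g h => sat g env \/ sat h env
  | FEx x g => exists w : V G, sat g (upd env x w)
  | FAll x g => forall w : V G, sat g (upd env x w)
  end.

Fixpoint free_in (Lab : Type) (i : nat) (f : formula Lab) : bool :=
  match f with
  | FEq x y => (i == x) || (i == y)
  | FAdj x y => (i == x) || (i == y)
  | FLab _ x => i == x
  | FNot g => free_in i g
  | FAnd g h | FOr g h => free_in i g || free_in i h
  | FEx x g | FAll x g => (i != x) && free_in i g
  end.

(* assignment x := u (variable 0), y := v (variable 1) *)
Definition env2 (T : Type) (u v : T) : nat -> T :=
  fun i => if i == 0 then u else v.

Definition sat2 (Lab : finType) (G : LGraph Lab) (psi : formula Lab)
  (u v : V G) : Prop := sat psi (env2 u v).
Arguments sat2 {Lab} G psi u v.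

Definition interpretation_formula (Lab : finType) (psi : formula Lab) : Prop :=
  (forall i, 2 <= i -> ~~ free_in i psi) /\
  (forall (G : LGraph Lab) (u v : V G), sat2 G psi u v -> sat2 G psi v u) /\
  (forall (G : LGraph Lab) (u : V G), ~ sat2 G psi u u).

Definition I_rel (Lab : finType) (psi : formula Lab) (G : LGraph Lab)
  : V G -> V G -> Prop := fun u v => sat2 G psi u v.
Arguments I_rel {Lab} psi G u v.

Section Game.
Variables (T : finType) (e : T -> T -> Prop).

Definition inD (a b w : T) : Prop := ~ (e a w <-> e b w).

Definition partial_iso (a b : seq T) : Prop :=
  size a = size b /\
  forall (x0 : T) i j, i < size a -> j < size a ->
    (nth x0 a i = nth x0 a j <-> nth x0 b i = nth x0 b j) /\
    (e (nth x0 a i) (nth x0 a j) <-> e (nth x0 b i) (nth x0 b j)).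

(* Duplicator has a winning strategy in the m-round game from (a, b).
   (If all D(a_i,b_i) are empty, the universal quantification is vacuous, so
   Duplicator wins, as in the definition.) *)
Fixpoint dup_wins (m : nat) (a b : seq T) : Prop :=
  match m with
  | 0 => partial_iso a b
  | m'.+1 =>
    forall i, i < size a -> forall x0 : T,
      let ai := nth x0 a i in let bi := nth x0 b i in
      forall v, inD ai bi v ->
        (exists w, inD ai bi w /\ dup_wins m' (rcons a v) (rcons b w)) /\
        (exists w, inD ai bi w /\ dup_wins m' (rcons a w) (rcons b v))
  end.

Definition diff_equiv (m : nat) (u v : T) : Prop := dup_wins m [:: u] [:: v].

Definition independent_in (R : T -> T -> Prop) (S : {set T}) : Prop :=
  forall u v, u \in S -> v \in S -> u != v -> ~ R u v.
End Game.

(* Bounded-distance reachability avoiding the vertex set S: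
   within G \ S, y is at distance <= r from x (x, y assumed outside S). *)
Fixpoint near_avoid (Lab : finType) (G : LGraph Lab) (S : {set V G}) (r : nat)
    (x y : V G) : Prop :=
  match r with
  | 0 => x = y
  | r'.+1 => near_avoid S r' x y \/
             exists z, z \notin S /\ adj x z /\ near_avoid S r' z y
  end.

Definition uniformly_quasi_wide (Lab : finType) (C : LGraph Lab -> Prop) : Prop :=
  forall r : nat, exists (N : nat -> nat) (s : nat),
    forall (k : nat) (G : LGraph Lab), C G ->
    forall A : {set V G}, N k <= #|A| ->
      exists S : {set V G}, #|S| <= s /\
        exists B : {set V G}, B \subset A :\: S /\ k <= #|B| /\
          forall x y, x \in B -> y \in B -> x != y -> ~ near_avoid S r x y.

(* Main.v *)
Require Import Defs.
From mathcomp Require Import all_boot.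
Set Implicit Arguments. Unset Strict Implicit. Unset Printing Implicit Defensive.

Section Game2.
Variables (Lab : finType) (G : LGraph Lab).
Local Notation VG := (V G).
Local Notation E := (@adj Lab G).

Definition atomic (L : seq (VG * VG)) : Prop :=
  forall p p', p \in L -> p' \in L ->
    (p.1 = p'.1 <-> p.2 = p'.2) /\ E p.1 p'.1 = E p.2 p'.2 /\
    (forall a, lab a p.1 = lab a p.2).

Fixpoint SW (q : nat) (L : seq (VG * VG)) : Prop :=
  match q with
  | 0 => atomic L
  | q'.+1 => atomic L /\ forall x, exists y, SW q' ((x, y) :: (y, x) :: L)
  end.

Lemma SW_atomic q L : SW q L -> atomic L.
Proof. by case: q => [|q] //= []. Qed.

Fixpoint qr (f : formula Lab) : nat :=
  match f with
  | FNot g => qr g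
  | FAnd g h | FOr g h => maxn (qr g) (qr h)
  | FEx _ g | FAll _ g => (qr g).+1
  | _ => 0
  end.



Lemma upd_pairs x w y (e1 e2 : nat -> VG) (L L' : seq (VG * VG)) (g : formula Lab) :
  (forall i, i != x -> free_in i g -> (e1 i, e2 i) \in L) ->
  (w, y) \in L' -> {subset L <= L'} ->
  forall i, free_in i g -> (upd e1 x w i, upd e2 x y i) \in L'.
Proof.
move=> H wy sub i fi; rewrite /upd; case: eqP => [//|/eqP ix].
exact/sub/H.
Qed.

Lemma SW_sat (f : formula Lab) : forall q L (e1 e2 : nat -> VG),
  qr f <= q -> SW q L -> (forall i, free_in i f -> (e1 i, e2 i) \in L) ->
  (sat f e1 <-> sat f e2).
Proof.
elim: f => [x y|x y|a x|g IH|g IHg h IHh|g IHg h IHh|x g IH|x g IH] q L e1 e2 /= hq hS hL.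
- have hx : (e1 x, e2 x) \in L by apply: hL; rewrite eqxx.
  have hy : (e1 y, e2 y) \in L by apply: hL; rewrite eqxx orbT.
  by have /= [H _] := SW_atomic hS hx hy.
- have hx : (e1 x, e2 x) \in L by apply: hL; rewrite eqxx.
  have hy : (e1 y, e2 y) \in L by apply: hL; rewrite eqxx orbT.
  by have /= [_ [-> _]] := SW_atomic hS hx hy.
- have hx : (e1 x, e2 x) \in L by apply: hL; rewrite eqxx.
  by have /= [_ [_ ->]] := SW_atomic hS hx hx.
- by have := IH q L e1 e2 hq hS hL; tauto.
- move: hq; rewrite geq_max => /andP[h1 h2].
  have hg : forall i, free_in i g -> (e1 i, e2 i) \in L by move=> i fi; apply: hL; rewrite fi.
  have hh : forall i, free_in i h -> (e1 i, e2 i) \in L by move=> i fi; apply: hL; rewrite fi orbT.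
  have := IHg q L e1 e2 h1 hS hg; have := IHh q L e1 e2 h2 hS hh; tauto.
- move: hq; rewrite geq_max => /andP[h1 h2].
  have hg : forall i, free_in i g -> (e1 i, e2 i) \in L by move=> i fi; apply: hL; rewrite fi.
  have hh : forall i, free_in i h -> (e1 i, e2 i) \in L by move=> i fi; apply: hL; rewrite fi orbT.
  have := IHg q L e1 e2 h1 hS hg; have := IHh q L e1 e2 h2 hS hh; tauto.
- case: q hq hS => [//|q] hq [_ hS]; split=> [[w hw]|[w hw]].
  + have [y hy] := hS w; exists y.
    have hf : forall i, free_in i g -> (upd e1 x w i, upd e2 x y i) \in (w, y) :: (y, w) :: L.
      apply: upd_pairs; first by move=> i ix fi; apply: hL; rewrite ix.
        by rewrite inE eqxx.
      by move=> p pL; rewrite !inE pL !orbT.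
    exact: (proj1 (IH q _ _ _ hq hy hf) hw).
  + have [y hy] := hS w; exists y.
    have hf : forall i, free_in i g -> (upd e1 x y i, upd e2 x w i) \in (w, y) :: (y, w) :: L.
      apply: upd_pairs; first by move=> i ix fi; apply: hL; rewrite ix.
        by rewrite !inE eqxx orbT.
      by move=> p pL; rewrite !inE pL !orbT.
    exact: (proj2 (IH q _ _ _ hq hy hf) hw).
- case: q hq hS => [//|q] hq [_ hS]; split=> hw w.
  + have [y hy] := hS w.
    have hf : forall i, free_in i g -> (upd e1 x y i, upd e2 x w i) \in (w, y) :: (y, w) :: L.
      apply: upd_pairs; first by move=> i ix fi; apply: hL; rewrite ix.
        by rewrite !inE eqxx orbT.
      by move=> p pL; rewrite !inE pL !orbT.
    exact: (proj1 (IH q _ _ _ hq hy hf) (hw y)).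
  + have [y hy] := hS w.
    have hf : forall i, free_in i g -> (upd e1 x w i, upd e2 x y i) \in (w, y) :: (y, w) :: L.
      apply: upd_pairs; first by move=> i ix fi; apply: hL; rewrite ix.
        by rewrite !inE eqxx.
      by move=> p pL; rewrite !inE pL !orbT.
    exact: (proj2 (IH q _ _ _ hq hy hf) (hw y)).
Qed.

Section Diff.
Variable psi : formula Lab.
Hypothesis hfree : forall i, 2 <= i -> ~~ free_in i psi.

Lemma psi_pres k L a1 b1 a2 b2 : qr psi <= k -> SW k L ->
  (a1, b1) \in L -> (a2, b2) \in L ->
  (I_rel psi G a1 a2 <-> I_rel psi G b1 b2).
Proof.
move=> hq hS h1 h2; rewrite /I_rel /sat2.
apply: (SW_sat hq hS) => -[|[|i]] fi //=.
Qed.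

Lemma rcons_pairs (a b : seq VG) (L L' : seq (VG * VG)) x y :
  size a = size b ->
  (forall x0 i, i < size a -> (nth x0 a i, nth x0 b i) \in L /\ (nth x0 b i, nth x0 a i) \in L) ->
  {subset L <= L'} -> (x, y) \in L' -> (y, x) \in L' ->
  forall x0 i, i < size (rcons a x) ->
    (nth x0 (rcons a x) i, nth x0 (rcons b y) i) \in L' /\
    (nth x0 (rcons b y) i, nth x0 (rcons a x) i) \in L'.
Proof.
move=> hsz hL sub hxy hyx x0 i; rewrite size_rcons ltnS leq_eqVlt => /orP[/eqP ->|hi].
  by rewrite !nth_rcons hsz ltnn eqxx.
rewrite !nth_rcons -hsz hi; have [h1 h2] := hL x0 i hi; split; exact: sub.
Qed.

Lemma SW_diff q : qr psi <= q ->
  forall j (a b : seq VG) L, SW (j + q) L -> size a = size b ->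
  (forall x0 i, i < size a -> (nth x0 a i, nth x0 b i) \in L /\ (nth x0 b i, nth x0 a i) \in L) ->
  dup_wins (I_rel psi G) j a b.
Proof.
move=> hq; elim=> [|j IH] a b L hS hsz hL /=.
  split=> // x0 i k hi hk.
  have [hi1 _] := hL x0 i hi; have [hk1 _] := hL x0 k hk.
  have [H _] := SW_atomic hS hi1 hk1.
  split; first exact: H.
  exact: (psi_pres hq hS hi1 hk1).
move=> i hi x0 v hv.
rewrite addSn in hS; case: hS => _ hS.
have [w hw] := hS v.
have hq' : qr psi <= j + q by apply: leq_trans hq (leq_addl _ _).
have sub : {subset L <= (v, w) :: (w, v) :: L} by move=> p pL; rewrite !inE pL !orbT.
have [h1 h2] := hL x0 i hi.
have h1' := sub _ h1; have h2' := sub _ h2.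
have hvw : (v, w) \in (v, w) :: (w, v) :: L by rewrite inE eqxx.
have hwv : (w, v) \in (v, w) :: (w, v) :: L by rewrite !inE eqxx orbT.
have e1 := psi_pres hq' hw h1' hvw; have e2 := psi_pres hq' hw h2' hvw.
have e3 := psi_pres hq' hw h1' hwv; have e4 := psi_pres hq' hw h2' hwv.
have hd1 : dup_wins (I_rel psi G) j (rcons a v) (rcons b w).
  apply: (IH _ _ _ hw); first by rewrite !size_rcons hsz.
  first [exact: (rcons_pairs hsz hL sub hvw hwv) | exact: (rcons_pairs hsz hL sub hwv hvw)].
have hd2 : dup_wins (I_rel psi G) j (rcons a w) (rcons b v).
  apply: (IH _ _ _ hw); first by rewrite !size_rcons hsz.
  first [exact: (rcons_pairs hsz hL sub hvw hwv) | exact: (rcons_pairs hsz hL sub hwv hvw)].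
move: hv; rewrite /inD => hv.
split; exists w; split => //; tauto.
Qed.
End Diff.

End Game2.

Section Types.
Variables (Lab : finType) (nT : nat).
Definition Atom (n : nat) : finType :=
  Finite.clone _ ({ffun 'I_n * 'I_n -> bool} * {ffun 'I_n * 'I_n -> bool} * {ffun Lab * 'I_n -> bool} * {ffun 'I_n * 'I_nT -> bool})%type.
Fixpoint TP (q n : nat) : finType :=
  match q with 0 => Atom n | q'.+1 => Finite.clone _ (TP q' n * {set TP q' n.+1})%type end.
End Types.

Section Local.
Variables (Lab : finType) (G : LGraph Lab) (T : {set V G}) (nT : nat) (t : nat -> V G).
Local Notation VG := (V G).
Local Notation E := (@adj Lab G).

Fixpoint nearb (r : nat) (x y : VG) : bool :=
  if r is r'.+1 then nearb r' x y || [exists z, (z \notin T) && E x z && nearb r' z y]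
  else x == y.

Definition atom n (c : nat -> VG) : Atom Lab nT n :=
  ([ffun ij : 'I_n * 'I_n => c ij.1 == c ij.2], [ffun ij : 'I_n * 'I_n => E (c ij.1) (c ij.2)],
   [ffun ai : Lab * 'I_n => lab ai.1 (c ai.2)], [ffun ik : 'I_n * 'I_nT => E (c ik.1) (t ik.2)]).

Definition ext (c : nat -> VG) n x := fun i => if i == n then x else c i.
Definition Ball j n (c : nat -> VG) : {set VG} :=
  [set x | (x \notin T) && [exists i : 'I_n, nearb (2^j) (c i) x]].

Fixpoint tp (q n : nat) (c : nat -> VG) {struct q} : TP Lab nT q n :=
  match q return TP Lab nT q n with
  | 0 => atom n c
  | q'.+1 => (tp q' n c, [set tp q' n.+1 (ext c n x) | x in Ball q' n c])
  end.

Lemma tp_down q n c d : tp q.+1 n c = tp q.+1 n d -> tp q n c = tp q n d.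
Proof. by case. Qed.

Lemma tp_ext q n c d x : tp q.+1 n c = tp q.+1 n d -> x \in Ball q n c ->
  exists2 y, y \in Ball q n d & tp q n.+1 (ext c n x) = tp q n.+1 (ext d n y).
Proof.
case=> _ H xB.
have : tp q n.+1 (ext c n x) \in [set tp q n.+1 (ext d n x) | x in Ball q n d].
  by rewrite -H; apply/imsetP; exists x.
by case/imsetP=> y yB ->; exists y.
Qed.

Lemma tp_atom q n c d : tp q n c = tp q n d -> atom n c = atom n d.
Proof. elim: q => [//|q IH] /tp_down; exact: IH. Qed.
Lemma nearb0 x : nearb 0 x x. Proof. by rewrite /= eqxx. Qed.

Lemma nearbS r x y : nearb r x y -> nearb r.+1 x y.
Proof. by move=> h; rewrite /= h. Qed.

Lemma nearb_mono r r' x y : r <= r' -> nearb r x y -> nearb r' x y.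
Proof.
move=> hr h; rewrite -(subnK hr); elim: (r' - r) => [//|k IH].
by rewrite addSn; apply: nearbS.
Qed.

Lemma nearb_trans a b x y z : nearb a x y -> nearb b y z -> nearb (a + b) x z.
Proof.
elim: a x => [|a IH] x /=.
  by move/eqP=> -> h; rewrite add0n.
case/orP=> [h|/existsP[w /andP[/andP[wT xw] h]]] hb; rewrite ?addSn /=.
  by rewrite IH.
apply/orP; right; apply/existsP; exists w; rewrite wT xw /=; exact: IH.
Qed.

Lemma nearb_sym r x y : x \notin T -> y \notin T -> nearb r x y -> nearb r y x.
Proof.
elim: r x => [|r IH] x /= xT yT.
  by rewrite eq_sym.
case/orP=> [h|/existsP[w /andP[/andP[wT xw] h]]].
  by rewrite IH.
have h1 := IH w wT yT h.
have h2 : nearb 1 w x.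
  rewrite /= orbC; apply/orP; left; apply/existsP; exists x.
  by rewrite xT eqxx adj_sym xw.
by have := nearb_trans h1 h2; rewrite addn1.
Qed.

Lemma contra_near a b r R p x y q : nearb a p x -> nearb b y q -> a + r + b <= R ->
  ~~ nearb R p q -> ~~ nearb r x y.
Proof.
move=> h1 h2 hle hR; apply/negP => h.
by have := nearb_mono hle (nearb_trans (nearb_trans h1 h) h2); rewrite (negbTE hR).
Qed.

Lemma far_mono r R x y : r <= R -> ~~ nearb R x y -> ~~ nearb r x y.
Proof. by move=> hr; apply: contra; apply: nearb_mono. Qed.

Lemma far1 r x y : 0 < r -> ~~ nearb r x y -> x != y /\ (y \notin T -> ~~ E x y).
Proof.
move=> r0 h; split.
  apply/negP=> /eqP exy; move: h; rewrite exy.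
  by rewrite (nearb_mono (leq0n r) (nearb0 y)).
move=> yT; apply/negP=> xy; move: h.
have : nearb 1 x y.
  rewrite /= orbC; apply/orP; left; apply/existsP; exists y; by rewrite yT xy eqxx.
by move/(nearb_mono r0) ->.
Qed.

Lemma nearP r x y : reflect (near_avoid T r x y) (nearb r x y).
Proof.
elim: r x => [|r IH] x /=; first exact: eqP.
apply: (iffP orP).
  case=> [/IH h|/existsP[z /andP[/andP[zT xz] /IH h]]]; [by left | by right; exists z].
case=> [/IH h|[z [zT [xz /IH h]]]]; [by left | right; apply/existsP; exists z; by rewrite zT xz h].
Qed.

Hypothesis hTt : forall z, z \in T -> exists2 k, k < nT & z = t k.

Lemma atom_eq n c d i k : atom n c = atom n d -> i < n -> k < n ->
  (c i == c k) = (d i == d k) /\ E (c i) (c k) = E (d i) (d k) /\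
  (forall a, lab a (c i) = lab a (d i)) /\ (forall l, l < nT -> E (c i) (t l) = E (d i) (t l)).
Proof.
rewrite /atom => -[h1 h2 h3 h4] hi hk.
move/ffunP: h1 => /(_ (Ordinal hi, Ordinal hk)) e1.
move/ffunP: h2 => /(_ (Ordinal hi, Ordinal hk)) e2.
rewrite !ffunE /= in e1 e2.
split=> //; split=> //; split.
  by move=> a; move/ffunP: h3 => /(_ (a, Ordinal hi)); rewrite !ffunE.
by move=> l hl; move/ffunP: h4 => /(_ (Ordinal hi, Ordinal hl)); rewrite !ffunE.
Qed.

Definition InvCD j n (c d : nat -> VG) (L : seq (VG * VG)) : Prop :=
  [/\ tp j n c = tp j n d,
      forall i, i < n -> c i \notin T /\ d i \notin T,
      forall i k, i < n -> k < n ->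
        ~~ nearb (2 ^ j.+1) (c i) (d k) /\ ~~ nearb (2 ^ j.+1) (d i) (c k) &
      forall p, p \in L ->
        (exists2 i, i < n & p = (c i, d i) \/ p = (d i, c i)) \/
        (p.1 = p.2 /\ (p.1 \in T \/ forall i, i < n ->
           ~~ nearb (2 ^ j) (c i) p.1 /\ ~~ nearb (2 ^ j) (d i) p.1))].

Lemma Inv_atomic j n c d L : InvCD j n c d L -> atomic L.
Proof.
case=> h1 h2 h3 h4.
have hat := tp_atom h1.
have pos : forall r, 0 < 2 ^ r by move=> r; rewrite expn_gt0.
           
have CD : forall i k, i < n -> k < n ->
   [/\ c i <> d k, d i <> c k, E (c i) (d k) = false & E (d i) (c k) = false].
  move=> i k hi hk; have [a b] := h3 i k hi hk.
  have [dkT _] := h2 k hk; have [_ dkT'] := h2 k hk.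
  have [ciT _] := h2 i hi; have [_ diT] := h2 i hi.
  have [hk1 _] := h2 k hk.
  have [a1 a2] := far1 (pos _) a; have [b1 b2] := far1 (pos _) b.
  split; [exact/eqP | exact/eqP | exact/negbTE/a2 | exact/negbTE/b2].
have CI : forall i z, i < n -> (z \in T \/ forall i, i < n ->
           ~~ nearb (2 ^ j) (c i) z /\ ~~ nearb (2 ^ j) (d i) z) ->
   [/\ c i <> z, d i <> z & E (c i) z = E (d i) z].
  move=> i z hi; have [ciT diT] := h2 i hi.
  case: (boolP (z \in T)) => zT.
    move=> _; have [l hl ez] := hTt zT; subst z.
    have [_ [_ [_ H]]] := atom_eq hat hi hi.
    split; [move=> e; move: ciT; by rewrite e zT | move=> e; move: diT; by rewrite e zT | exact: H].
  case=> [//|H].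
  have [a b] := H i hi.
  have [a1 a2] := far1 (pos _) a; have [b1 b2] := far1 (pos _) b.
  split; [exact/eqP | exact/eqP | by rewrite (negbTE (a2 zT)) (negbTE (b2 zT))].
move=> p p' hp hp'.
case: (h4 p hp) => [[i hi [-> | ->]] | [e1 hz]];
case: (h4 p' hp') => [[k hk [-> | ->]] | [e2 hz']] /=.
- have [H1 [H2 [H3 _]]] := atom_eq hat hi hk.
  split; first by split=> e; apply/eqP; [rewrite -H1 e | rewrite H1 e].
  by split.
- have [n1 n2 -> ->] := CD i k hi hk.
  have [_ [_ [H3 _]]] := atom_eq hat hi hk.
  split; last by split.
  by split=> e; [case: n1 | case: n2].
- have [C1 C2 C3] := CI i p'.1 hi hz'.
  have [_ [_ [H3 _]]] := atom_eq hat hi hi.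
  rewrite -e2 C3; split=> //; by split.
- have [n1 n2 -> ->] := CD i k hi hk.
  have [_ [_ [H3 _]]] := atom_eq hat hi hi.
  split; last by split.
  by split=> e; [case: n2 | case: n1].
- have [H1 [H2 [H3 _]]] := atom_eq hat hi hk.
  split; first by split=> e; apply/eqP; [rewrite H1 e | rewrite -H1 e].
  by split.
- have [C1 C2 C3] := CI i p'.1 hi hz'.
  have [_ [_ [H3 _]]] := atom_eq hat hi hi.
  rewrite -e2 C3; split=> //; by split.
- have [C1 C2 C3] := CI k p.1 hk hz.
  rewrite -e1 adj_sym C3 adj_sym; split=> //; split=> e; [case: C1 | case: C2]; by rewrite e.
- have [C1 C2 C3] := CI k p.1 hk hz.
  rewrite -e1 adj_sym -C3 adj_sym; split=> //; split=> e; [case: C2 | case: C1]; by rewrite e.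
- by rewrite -e1 -e2.
Qed.


Lemma Inv_sub j n c d (L L' : seq (VG * VG)) : InvCD j n c d L -> {subset L' <= L} ->
  InvCD j n c d L'.
Proof. by case=> h1 h2 h3 h4 sub; split=> // p /sub /h4. Qed.

Lemma Inv_down j n c d L : InvCD j.+1 n c d L -> InvCD j n c d L.
Proof.
case=> h1 h2 h3 h4; split.
- exact: tp_down.
- exact: h2.
- move=> i k hi hk; have [a b] := h3 i k hi hk.
  by split; apply: (far_mono _ a) || apply: (far_mono _ b); rewrite leq_exp2l.
- move=> p /h4 [H|[e H]]; [by left | right; split=> //].
  case: H => [H|H]; [by left | right=> i hi; have [a b] := H i hi].
  by split; apply: (far_mono _ a) || apply: (far_mono _ b); rewrite leq_exp2l.
Qed.

Lemma Inv_add_id j n c d L z : InvCD j n c d L ->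
  (z \in T \/ forall i, i < n -> ~~ nearb (2 ^ j) (c i) z /\ ~~ nearb (2 ^ j) (d i) z) ->
  InvCD j n c d ((z, z) :: (z, z) :: L).
Proof.
case=> h1 h2 h3 h4 hz; split=> // p; rewrite !inE orbA orbb => /orP[/eqP ->|/h4 //].
by right.
Qed.

Definition swp (p : VG * VG) := (p.2, p.1).
Lemma swpK : involutive swp. Proof. by case. Qed.

Lemma Inv_sym j n c d L : InvCD j n c d L -> InvCD j n d c (map swp L).
Proof.
case=> h1 h2 h3 h4; split.
- by rewrite h1.
- by move=> i hi; have [a b] := h2 i hi.
- by move=> i k hi hk; have [a b] := h3 i k hi hk; split.
- move=> p /mapP[p0 /h4 [[i hi [-> | ->]] | [e H]] ->].
  + by left; exists i => //; left.
  + by left; exists i => //; right.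
  + right; rewrite /swp /=; split=> //; rewrite -e.
    case: H => [H|H]; [by left | right=> i hi; have [a b] := H i hi; by split].
Qed.

Lemma ext_c j n c d L x : InvCD j.+1 n c d L -> x \in Ball j n c ->
  exists y, InvCD j n.+1 (ext c n x) (ext d n y) ((x, y) :: (y, x) :: L).
Proof.
move=> [h1 h2 h3 h4] hx.
have [y hy htp] := tp_ext h1 hx; exists y.
move: hx hy; rewrite !inE => /andP[xT /existsP[i0 hi0]] /andP[yT /existsP[k0 hk0]].
have [ci0T di0T] := h2 i0 (ltn_ord i0).
have [ck0T dk0T] := h2 k0 (ltn_ord k0).
have hi0' := nearb_sym ci0T xT hi0.
have hk0' := nearb_sym dk0T yT hk0.
set r := 2 ^ j.
have e2 : 2 ^ j.+1 = r + r by rewrite expnS mul2n addnn.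
have e4 : 2 ^ j.+2 = r + r + r + r by rewrite expnS e2 mul2n -addnn !addnA.
have far4 : forall i k, i < n -> k < n ->
   ~~ nearb (r + r + r + r) (c i) (d k) /\ ~~ nearb (r + r + r + r) (d i) (c k).
  by move=> i k hi hk; rewrite -e4; exact: h3.
split=> //.
- move=> i; rewrite /ext; case: eqP => [_ _|ni]; first by rewrite xT yT.
  by move=> hi; apply: h2; rewrite ltn_neqAle; apply/andP; split; [apply/eqP|].
- move=> i k hi hk; rewrite /ext e2 !ltnS in hi hk *.
  case: eqP => [_|ni]; case: eqP => [_|nk];
  try (have {}hi : i < n by rewrite ltn_neqAle (introN eqP ni) hi);
  try (have {}hk : k < n by rewrite ltn_neqAle (introN eqP nk) hk).
  + split.
      apply: (contra_near hi0 hk0' _ (proj1 (far4 _ _ (ltn_ord i0) (ltn_ord k0)))).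
      by rewrite !addnA.
    apply: (contra_near hk0 hi0' _ (proj2 (far4 _ _ (ltn_ord k0) (ltn_ord i0)))).
    by rewrite !addnA.
  + split.
      apply: (contra_near hi0 (nearb0 _) _ (proj1 (far4 _ _ (ltn_ord i0) hk))).
      by rewrite addn0 !addnA leq_addr.
    apply: (contra_near hk0 (nearb0 _) _ (proj2 (far4 _ _ (ltn_ord k0) hk))).
    by rewrite addn0 !addnA leq_addr.
  + split.
      apply: (contra_near (nearb0 _) hk0' _ (proj1 (far4 _ _ hi (ltn_ord k0)))).
      by rewrite -/r add0n leq_addr.
    apply: (contra_near (nearb0 _) hi0' _ (proj2 (far4 _ _ hi (ltn_ord i0)))).
    by rewrite -/r add0n leq_addr.
  + have [a b] := h3 i k hi hk.
    by split; apply: (far_mono _ a) || apply: (far_mono _ b); rewrite -e2 leq_exp2l.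
- move=> p; rewrite !inE => /orP[/eqP ->|/orP[/eqP ->|/h4 H]].
  + by left; exists n => //; left; rewrite /ext eqxx.
  + by left; exists n => //; right; rewrite /ext eqxx.
  case: H => [[i hi H]|[e H]].
    left; exists i; first exact: ltnW.
    by rewrite /ext (ltn_eqF hi).
  right; split=> //; case: H => [H|H]; [by left | right].
  move=> i; rewrite ltnS leq_eqVlt /ext => /orP[/eqP ->|hi].
    rewrite eqxx; have [a _] := H i0 (ltn_ord i0); have [_ b] := H k0 (ltn_ord k0).
    split.
      by apply: (contra_near hi0 (nearb0 _) _ a); rewrite addn0 e2.
    by apply: (contra_near hk0 (nearb0 _) _ b); rewrite addn0 e2.
  rewrite (ltn_eqF hi); have [a b] := H i hi.
  by split; apply: (far_mono _ a) || apply: (far_mono _ b); rewrite leq_exp2l.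
Qed.

Lemma Inv_SW j : forall n c d L, InvCD j n c d L -> SW j L.
Proof.
elim: j => [|j IH] n c d L h; first exact: Inv_atomic h.
split; first exact: Inv_atomic h.
move=> x.
case xT: (x \in T).
  by exists x; apply: IH (Inv_add_id (Inv_down h) (or_introl xT)).
case: (boolP [exists i : 'I_n, nearb (2 ^ j) (c i) x]) => hc.
  have xB : x \in Ball j n c by rewrite inE xT hc.
  by have [y hy] := ext_c h xB; exists y; exact: IH hy.
case: (boolP [exists i : 'I_n, nearb (2 ^ j) (d i) x]) => hd.
  have xB : x \in Ball j n d by rewrite inE xT hd.
  have [y hy] := ext_c (Inv_sym h) xB; exists y.
  apply: (IH _ _ _ _ (Inv_sub (Inv_sym hy) _)).
  move=> p; rewrite /= (mapK swpK) !inE.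
  by case/orP=> [->|/orP[->|->]]; rewrite ?orbT.
exists x; apply: IH (Inv_add_id (Inv_down h) (or_intror _)).
move=> i hi; split.
  by apply/negP=> H; move/negP: hc; apply; apply/existsP; exists (Ordinal hi).
by apply/negP=> H; move/negP: hd; apply; apply/existsP; exists (Ordinal hi).
Qed.

End Local.

Theorem theorem6p8 (Lab : finType) (C : LGraph Lab -> Prop) (psi : formula Lab) :
  uniformly_quasi_wide C -> interpretation_formula psi ->
  forall m : nat, exists p : nat,
    forall G : LGraph Lab, C G ->
    forall S : {set V G},
      independent_in (diff_equiv (I_rel psi G) m) S -> #|S| <= p.
Proof.
move=> hU _ m.
pose q := qr psi; pose Q := m + q.
have [N [s hN]] := hU (2 ^ Q.+1).
pose K := \max_(i < s.+1) #|TP Lab i Q 1|.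
exists (N K.+1) => G CG S hind.
rewrite leqNgt; apply/negP => hlt.
have [T [hTs [B [hB [hKB hfar]]]]] := hN K.+1 G CG S (ltnW hlt).
have [b0 b0B] : exists b0, b0 \in B.
  by apply/card_gt0P; apply: leq_trans hKB.
pose nT := #|T|.
pose t := fun k => nth b0 (enum T) k.
have hTt : forall z, z \in T -> exists2 k, k < nT & z = t k.
  move=> z zT; exists (index z (enum T)).
    by rewrite /nT cardE index_mem mem_enum.
  by rewrite /t nth_index // mem_enum.
pose f := fun u => tp T nT t Q 1 (fun _ => u).
case: (boolP [exists u in B, exists v in B, (u != v) && (f u == f v)]).
  case/existsP=> u /andP[uB /existsP[v /andP[vB /andP[uv /eqP fuv]]]].
  have /setDP[uS uT] := subsetP hB u uB.
  have /setDP[vS vT] := subsetP hB v vB.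
  apply: (hind u v uS vS uv).
  have hInv : InvCD T nT t Q 1 (fun _ => u) (fun _ => v) [:: (u, v); (v, u)].
    split=> //.
    - move=> i k _ _; split; apply/negP => /nearP; apply: hfar => //.
      by rewrite eq_sym.
    - move=> p; rewrite !inE => /orP[/eqP ->|/eqP ->]; left; exists 0 => //; by [left | right].
  have hS := Inv_SW hTt hInv.
  apply: (SW_diff (q := q) (leqnn _) hS) => //.
  by move=> x0 [|i] //= _; rewrite !inE !eqxx ?orbT.
move=> hninj.
have inj : {in B &, injective f}.
  move=> u v uB vB fuv; apply/eqP; apply/negPn/negP => uv.
  move/negP: hninj; apply; apply/existsP; exists u; rewrite uB /=.
  by apply/existsP; exists v; rewrite vB uv fuv eqxx.
have : #|B| <= K.
  rewrite -(card_in_imset inj).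
  apply: leq_trans (max_card _) _.
  have hTs' : nT < s.+1 by rewrite ltnS.
  exact: (leq_bigmax_cond (F := fun i : 'I_s.+1 => #|TP Lab i Q 1|) (Ordinal hTs')).
by rewrite leqNgt hKB.
Qed.
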